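(* Let $V,W$ be locally convex spaces, $\Omega\subset V$ open, and $D=d+A$ a connection on $\Omega\times W\to\Omega$. Let $I\subset\mathbb R$ be an interval. Suppose $x_n\in C^1(I,\Omega)$ converge in the $C^1$ topology to $x\colon I\to\Omega$ (i.e. $x_n\to x$ and $dx_n/dt\to dx/dt$ uniformly on $I$), and that parallel lifts $\xi_n\in C^1(I,W)$ of $x_n$ converge uniformly to $\xi\colon I\to W$. Then $\xi$ is $C^1$ and is a parallel lift of $x$.
   Context: All locally convex spaces are real, Hausdorff and sequentially complete. A connection on $\Omega\times W\to\Omega$ is the operator $D_\xi\varphi(v)=d\varphi(v,\xi)+A(v,\xi)\varphi(v)$ on $C^1$ maps $\varphi\colon\Omega\to W$, where the connection form $A\colon\Omega\times V\to\mathrm{Hom}(W,W)$ (continuous linear maps) is linear in $\xi$ and $(v,\xi,w)\mapsto A(v,\xi)w\in W$ is continuous. Given a $C^1$ curve $x\colon I\to\Omega$, a parallel lift of $x$ is a $C^1$ map $\xi\colon I\to W$ with $\frac{d\xi}{dt}+A\big(x,\frac{dx}{dt}\big)\xi=0$ on $I$. *)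

(* Defs.v *)
From HB Require Import structures.
From mathcomp Require Import all_boot all_order all_algebra.
From mathcomp Require Import all_classical all_reals all_analysis.
Set Implicit Arguments. Unset Strict Implicit. Unset Printing Implicit Defensive.
Import Order.TTheory GRing.Theory Num.Theory numFieldNormedType.Exports.
Local Open Scope classical_set_scope.
Local Open Scope ring_scope.

Definition seq_complete (E : uniformType) : Prop :=
  forall u : nat -> E, cauchy (u @ \oo) -> exists l : E, u @ \oo --> l.

Definition has_deriv_on (R : realType) (E : tvsType R) (I : set R)
    (f f' : R -> E) : Prop :=
  forall t, I t ->
    (fun s => (s - t)^-1 *: (f s - f t)) @ within (I `\ t) (nbhs t) --> f' t.

Definition C1_on (R : realType) (E : tvsType R) (I : set R) (f f' : R -> E) : Prop :=
  has_deriv_on I f f' /\ {within I, continuous f'}.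

(* Connection form A : Omega x V -> Hom(W,W): linear in xi, each A(v,xi) linear,
   and (v,xi,w) |-> A(v,xi) w jointly continuous on Omega x V x W. *)
Definition connection_form (R : realType) (V W : tvsType R) (Om : set V)
    (A : V -> V -> W -> W) : Prop :=
  [/\ (forall v, Om v -> forall (c : R) xi1 xi2 w,
         A v (c *: xi1 + xi2) w = c *: A v xi1 w + A v xi2 w),
      (forall v, Om v -> forall xi (c : R) w1 w2,
         A v xi (c *: w1 + w2) = c *: A v xi w1 + A v xi w2) &
      {within [set p : V * V * W | Om p.1.1],
         continuous (fun p : V * V * W => A p.1.1 p.1.2 p.2)}].

Definition parallel_lift (R : realType) (V W : tvsType R) (A : V -> V -> W -> W)
    (I : set R) (x x' : R -> V) (xi xi' : R -> W) : Prop :=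
  C1_on I xi xi' /\ forall t, I t -> xi' t + A (x t) (x' t) (xi t) = 0.

(* Main.v *)
Require Import Defs.
From HB Require Import structures.
From mathcomp Require Import all_boot all_order all_algebra.
From mathcomp Require Import all_classical all_reals all_analysis.
From mathcomp Require Import ring lra.
Import Order.TTheory GRing.Theory Num.Theory numFieldNormedType.Exports.
Local Open Scope classical_set_scope.
Local Open Scope ring_scope.
Set Implicit Arguments. Unset Strict Implicit.
Lemma tcvgZ (R : realType) (W : tvsType R) (T : Type) (F : set_system T) {FF : Filter F}
  (s : T -> R) (f : T -> W) (k : R) (a : W) :
  s @ F --> k -> f @ F --> a -> (fun t => s t *: f t) @ F --> k *: a.
Proof.
move=> hs hf.
apply: (@continuous2_cvg T R^o W W F FF s f (fun k (y : W) => k *: y) k a) => //.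
exact: (@scale_continuous R W (k, a)).
Qed.

Lemma tcvgD (R : realType) (W : tvsType R) (T : Type) (F : set_system T) {FF : Filter F}
  (f g : T -> W) (a b : W) :
  f @ F --> a -> g @ F --> b -> (fun t => f t + g t) @ F --> a + b.
Proof.
move=> hf hg.
apply: (@continuous2_cvg T W W W F FF f g (fun x y : W => x + y) a b) => //.
exact: (@add_continuous W (a, b)).
Qed.

Lemma tcvgN (R : realType) (W : tvsType R) (T : Type) (F : set_system T) {FF : Filter F}
  (f : T -> W) (a : W) :
  f @ F --> a -> (fun t => - f t) @ F --> - a.
Proof.
move=> hf; apply: continuous_cvg => //; exact: (@opp_continuous W a).
Qed.

Lemma tcvgB (R : realType) (W : tvsType R) (T : Type) (F : set_system T) {FF : Filter F}
  (f g : T -> W) (a b : W) :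
  f @ F --> a -> g @ F --> b -> (fun t => f t - g t) @ F --> a - b.
Proof. by move=> hf hg; apply: tcvgD => //; apply: tcvgN. Qed.

Definition gauge (R : realType) (W : tvsType R) (D : set W) (x : W) : R :=
  inf [set r : R | 0 < r /\ D (r^-1 *: x)].

Lemma conv_comb (R : realType) (W : tvsType R) (D : set W)
  (cD : convex_set (R:=R) (M:=W) D) (x y : W) (l : R) :
  D x -> D y -> 0 <= l -> l <= 1 -> D (l *: x + (1 - l) *: y).
Proof.
move=> Dx Dy l0 l1.
have := cD x y (Itv01 l0 l1) (mem_set Dx) (mem_set Dy).
by rewrite inE.
Qed.

Lemma absorb (R : realType) (W : tvsType R) (D : set W) (nD : nbhs 0 D) (x : W) :
  exists2 r : R, 0 < r & D (r^-1 *: x).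
Proof.
have H : \forall k \near (0:R), D (k *: x).
  have := @tcvgZ R W R (nbhs (0:R)) _ id (fun=> x) 0 x cvg_id (cvg_cst x).
  by rewrite scale0r; apply.
have [e /= e0 He] := (nbhs_ballP _ _).1 H.
exists (e / 2)^-1; first by rewrite invr_gt0 divr_gt0.
rewrite invrK; apply: He.
rewrite /ball /= sub0r normrN gtr0_norm ?divr_gt0 //.
by rewrite ltr_pdivrMr // ltr_pMr // ltr1n.
Qed.

Lemma gauge_lb (R : realType) (W : tvsType R) (D : set W) (x : W) :
  has_lbound [set r : R | 0 < r /\ D (r^-1 *: x)].
Proof. by exists 0 => r [/ltW]. Qed.

Lemma gauge_le (R : realType) (W : tvsType R) (D : set W) (x : W) (r : R) :
  0 < r -> D (r^-1 *: x) -> gauge D x <= r.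
Proof. by move=> r0 Dr; apply: ge_inf; [exact: gauge_lb|]. Qed.

Lemma gauge_ge0 (R : realType) (W : tvsType R) (D : set W) (nD : nbhs 0 D) (x : W) :
  0 <= gauge D x.
Proof.
apply: lb_le_inf; first by have [r r0 Dr] := absorb nD x; exists r.
by move=> r [/ltW].
Qed.

Lemma gauge_le1 (R : realType) (W : tvsType R) (D : set W) (x : W) :
  D x -> gauge D x <= 1.
Proof. by move=> Dx; apply: gauge_le => //; rewrite invr1 scale1r. Qed.

Lemma gauge_lt1 (R : realType) (W : tvsType R) (D : set W)
  (cD : convex_set (R:=R) (M:=W) D) (nD : nbhs 0 D) (x : W) :
  gauge D x < 1 -> D x.
Proof.
move=> g1.
have hi : has_inf [set r : R | 0 < r /\ D (r^-1 *: x)].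
  split; last exact: gauge_lb.
  by have [r r0 Dr] := absorb nD x; exists r.
have g0 : 0 < 1 - gauge D x by rewrite subr_gt0.
have [e [e0 De] egt] := @inf_adherent R _ (1 - gauge D x) g0 hi.
rewrite addrC subrK in egt.
have := conv_comb cD De (nbhs_singleton nD) (ltW e0) (ltW egt).
by rewrite scaler0 addr0 scalerA divff ?gt_eqF // scale1r.
Qed.

Lemma gauge_tri (R : realType) (W : tvsType R) (D : set W)
  (cD : convex_set (R:=R) (M:=W) D) (nD : nbhs 0 D) (x y : W) :
  gauge D (x + y) <= gauge D x + gauge D y.
Proof.
have key : forall r r', 0 < r -> D (r^-1 *: x) -> 0 < r' -> D (r'^-1 *: y) ->
    gauge D (x + y) <= r + r'.
  move=> r r' r0 Dr r'0 Dr'.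
  have rr0 : 0 < r + r' by rewrite addr_gt0.
  apply: gauge_le => //.
  have l0 : 0 <= r / (r + r') by rewrite divr_ge0 // ltW.
  have l1 : r / (r + r') <= 1 by rewrite ler_pdivrMr // mul1r lerDl ltW.
  have := conv_comb cD Dr Dr' l0 l1.
  have -> : 1 - r / (r + r') = r' / (r + r').
    by field; rewrite !gt_eqF //=.
  have e1 : r / (r + r') * r^-1 = (r + r')^-1 by field; rewrite !gt_eqF //=.
  have e2 : r' / (r + r') * r'^-1 = (r + r')^-1 by field; rewrite !gt_eqF //=.
  by rewrite !scalerA e1 e2 -scalerDr.
rewrite -lerBlDr; apply: lb_le_inf; first by have [r r0 Dr] := absorb nD x; exists r.
move=> r [r0 Dr]; rewrite lerBlDr (addrC r) -lerBlDr.
apply: (@lb_le_inf R [set r : R | 0 < r /\ D (r^-1 *: y)]); first by have [r' r'0 Dr'] := absorb nD y; exists r'.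
by move=> r' [r'0 Dr']; rewrite lerBlDr (addrC r'); apply: key.
Qed.

Lemma gaugeZ (R : realType) (W : tvsType R) (D : set W)
  (nD : nbhs 0 D) (sD : forall z, D z -> D (- z)) (k : R) (x : W) :
  gauge D (k *: x) <= `|k| * gauge D x.
Proof.
have [->|k0] := eqVneq k 0.
  rewrite scale0r normr0 mul0r; apply/ler_addgt0Pr => e e0; rewrite add0r.
  by apply: gauge_le => //; rewrite scaler0; exact: nbhs_singleton nD.
have nk : 0 < `|k| by rewrite normr_gt0.
rewrite mulrC -ler_pdivrMr //.
apply: lb_le_inf; first by have [r r0 Dr] := absorb nD x; exists r.
move=> r [r0 Dr]; rewrite ler_pdivrMr //.
apply: gauge_le; first by rewrite mulr_gt0.
rewrite scalerA.
have [kp|kn] := ltrP 0 k.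
  have -> : (r * `|k|)^-1 * k = r^-1 by rewrite gtr0_norm //; field; rewrite !gt_eqF.
  exact: Dr.
have kn' : k < 0 by rewrite lt_neqAle k0 kn.
have -> : (r * `|k|)^-1 * k = - r^-1.
  by rewrite ltr0_norm //; field; rewrite (lt_eqF kn') gt_eqF.
by rewrite scaleNr; apply: sD.
Qed.

Lemma gauge_small (R : realType) (W : tvsType R) (D : set W)
  (nD : nbhs 0 D) (sD : forall z, D z -> D (- z)) (e : R) :
  0 < e -> \forall z \near (0 : W), gauge D z <= e.
Proof.
move=> e0; have := nbhs0Z (lt0r_neq0 e0) nD.
apply: filterS => z [d Dd <-].
apply: (le_trans (gaugeZ nD sD e d)).
rewrite gtr0_norm // -[leRHS]mulr1 ler_pM2l //; exact: gauge_le1.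
Qed.

Lemma gauge_limit (R : realType) (W : tvsType R) (D : set W)
  (cD : convex_set (R:=R) (M:=W) D)
  (nD : nbhs 0 D) (sD : forall z, D z -> D (- z))
  (T : Type) (F : set_system T) {FF : ProperFilter F} (yn : T -> W) (y : W) (c : R) :
  yn @ F --> y -> (\forall t \near F, gauge D (yn t) <= c) -> gauge D y <= c.
Proof.
move=> hy hc; apply/ler_addgt0Pr => e e0.
have h0 : (fun t => y - yn t) @ F --> 0.
  have := @tcvgB R W T F _ (fun=> y) yn y y (cvg_cst y) hy.
  rewrite subrr; apply.
have h1 : \forall t \near F, gauge D (y - yn t) <= e.
  exact: (h0 _ (gauge_small nD sD e0)).
have [t [ht1 ht2]] := filter_ex (filterI hc h1).
have -> : y = yn t + (y - yn t) by rewrite addrC subrK.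
by apply: (le_trans (gauge_tri cD nD _ _)); apply: lerD.
Qed.

Lemma zmod_id (R : realType) (W : lmodType R) (a b d : W) (p q : R) (c : W) :
  a - b - (p + q) *: c = (d - b - p *: c) + (a - d - q *: c).
Proof.
rewrite scalerDl opprD.
rewrite [d - b - _]addrC [_ + (a - d - _)]addrC.
rewrite -!addrA; congr (_ + _).
rewrite !addrA [X in _ = X - b]addrC !addrA subrr add0r.
by rewrite [RHS]addrC addrA addrAC.
Qed.

Lemma mvt (R : realType) (W : tvsType R) (D : set W)
  (cD : convex_set (R:=R) (M:=W) D)
  (nD : nbhs 0 D) (sD : forall z, D z -> D (- z))
  (I : set R) (phi phi' : R -> W) (c : W) (M al be : R) :
  al <= be ->
  (forall u, al <= u <= be -> I u) ->
  (forall u, al <= u <= be -> phi @ within I (nbhs u) --> phi u) ->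
  (forall u, al <= u < be ->
     (fun s => (s - u)^-1 *: (phi s - phi u)) @ within (I `\ u) (nbhs u) --> phi' u) ->
  (forall u, al <= u <= be -> gauge D (phi' u - c) <= M) ->
  gauge D (phi be - phi al - (be - al) *: c) <= M * (be - al).
Proof.
move=> albe Isub phic phid phiM.
set h := fun u => gauge D (phi u - phi al - (u - al) *: c).
have M0 : 0 <= M.
  by apply: le_trans (phiM al _); [exact: gauge_ge0 | rewrite lexx albe].
have key : forall e, 0 < e -> h be <= (M + e) * (be - al) + e.
  move=> e e0; set K := M + e.
  have K0 : 0 <= K by rewrite addr_ge0 // ltW.
  rewrite leNgt; apply/negP => hbe.
  set S := [set u | (al <= u <= be) /\ K * (u - al) + e < h u].
  have Sbe : S be by split => //; rewrite lexx albe.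
  have Slb : has_lbound S by exists al => u [/andP[]].
  have Sne : S !=set0 by exists be.
  set u0 := inf S.
  have alu0 : al <= u0 by apply: lb_le_inf => // u [/andP[]].
  have u0be : u0 <= be by apply: ge_inf.
  have below : forall u, al <= u < u0 -> h u <= K * (u - al) + e.
    move=> u /andP[alu uu0]; rewrite leNgt; apply/negP => hu.
    have : S u by split => //; rewrite alu (le_trans (ltW uu0) u0be).
    by move/(ge_inf Slb); rewrite leNgt uu0.
  have hu0 : h u0 <= K * (u0 - al) + e.
    have [<-|alu0'] := eqVneq al u0.
      rewrite /h !subrr scale0r subr0 mulr0 add0r.
      by apply: gauge_le => //; rewrite scaler0; exact: nbhs_singleton nD.
    have alu0s : al < u0 by rewrite lt_neqAle alu0' alu0.
    apply: (@gauge_limit R W D cD nD sD R (u0^'-) _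
              (fun u => phi u - phi al - (u - al) *: c)).
    - apply: tcvgB; [apply: tcvgB|].
      + apply: cvg_trans (phic u0 _); last by rewrite alu0 u0be.
        apply: cvg_app => P HP.
        have H3 : \forall u \near u0^'-, I u -> P u by apply: cvg_within; exact: HP.
        apply: filterS3 (nbhs_left_gt alu0s) (nbhs_left_lt u0) H3 => u h1 h2 h3.
        by apply: h3; apply: Isub; rewrite (ltW h1) (le_trans (ltW h2) u0be).
      + exact: cvg_cst.
      + apply: tcvgZ; last exact: cvg_cst.
        apply: cvgB; last exact: cvg_cst.
        exact: cvg_within_filter cvg_id.
    - apply: filterS2 (nbhs_left_gt alu0s) (nbhs_left_lt u0) => u h1 h2.
      apply: le_trans (below u _) _; first by rewrite (ltW h1) h2.
      by rewrite lerD2r ler_wpM2l // lerD2r ltW.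
  have u0lt : u0 < be.
    rewrite lt_neqAle u0be andbT; apply/eqP => eu.
    by move: hbe; rewrite -eu ltNge hu0.
  have := phid u0; rewrite alu0 u0lt => /(_ isT) hd.
  have hd' : \forall s \near within (I `\ u0) (nbhs u0),
      gauge D ((s - u0)^-1 *: (phi s - phi u0) - phi' u0) <= e.
    have := tcvgB hd (cvg_cst (phi' u0)).
    have FW : Filter (within (I `\ u0) (nbhs u0)) by exact: within_filter.
    by rewrite subrr => h0; exact: (h0 FW FW _ (gauge_small nD sD e0)).
  have [d /= d0 Hd] := (nbhs_ballP _ _).1 hd'.
  have [v Sv vlt] := inf_adherent d0 (conj Sne Slb).
  have u0v : u0 <= v := ge_inf Slb Sv.
  move: Sv => [/andP[alv vbe] hv].
  have vu0 : v != u0.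
    by apply/eqP => ev; move: hv; rewrite ev ltNge hu0.
  have u0vs : u0 < v by rewrite lt_neqAle eq_sym vu0 u0v.
  have Pv := Hd v.
  have {Pv} Pv : gauge D ((v - u0)^-1 *: (phi v - phi u0) - phi' u0) <= e.
    apply: Pv.
      by rewrite /ball /= ltr_norml; apply/andP; split; lra.
    split; first by apply: Isub; rewrite alv vbe.
    by move=> /= ev; move: vu0; rewrite ev eqxx.
  have eqv : phi v - phi al - (v - al) *: c =
      (phi u0 - phi al - (u0 - al) *: c) +
      ((v - u0) *: ((v - u0)^-1 *: (phi v - phi u0) - phi' u0) +
       (v - u0) *: (phi' u0 - c)).
    rewrite -scalerDr.
    have -> : forall Y, (Y - phi' u0) + (phi' u0 - c) = Y - c.
      by move=> Y; rewrite addrA subrK.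
    rewrite scalerBr scalerA divff ?subr_eq0 // scale1r.
    have -> : v - al = (u0 - al) + (v - u0) by rewrite [RHS]addrC addrA subrK.
    exact: zmod_id.
  have hv' : h v <= K * (v - al) + e.
    rewrite /h eqv.
    apply: le_trans (gauge_tri cD nD _ _) _.
    have -> : K * (v - al) + e = (K * (u0 - al) + e) + ((v - u0) * e + (v - u0) * M).
      by rewrite /K; ring.
    apply: lerD; first exact: hu0.
    apply: le_trans (gauge_tri cD nD _ _) _.
    have vu0p : 0 < v - u0 by rewrite subr_gt0.
    apply: lerD.
      apply: le_trans (gaugeZ nD sD _ _) _.
      by rewrite gtr0_norm // ler_wpM2l // ltW.
    apply: le_trans (gaugeZ nD sD _ _) _.
    by rewrite gtr0_norm // ler_pM2l //; apply: phiM; rewrite alu0 u0be.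
  by move: hv; rewrite ltNge hv'.
apply/ler_addgt0Pr => e e0.
have be1 : 0 < be - al + 1 by rewrite ltr_wpDl // subr_ge0.
have := key (e / (be - al + 1)) (divr_gt0 e0 be1).
move/le_trans; apply.
rewrite mulrDl -addrA lerD2l.
have -> : e / (be - al + 1) * (be - al) + e / (be - al + 1) = e.
  by field; rewrite gt_eqF.
by [].
Qed.

Lemma deriv_cont (R : realType) (W : tvsType R) (I : set R) (f f' : R -> W) (t : R) :
  has_deriv_on I f f' -> I t -> f @ within I (nbhs t) --> f t.
Proof.
move=> hd It.
have FW : Filter (within (I `\ t) (nbhs t)) by exact: within_filter.
have h1 : (fun s => (s - t) *: ((s - t)^-1 *: (f s - f t)) + f t)
    @ within (I `\ t) (nbhs t) --> 0 *: f' t + f t.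
  apply: tcvgD; last exact: cvg_cst.
  apply: tcvgZ; last exact: hd.
  rewrite -(subrr t); apply: cvgB; last exact: cvg_cst.
  exact: cvg_within_filter cvg_id.
rewrite scale0r add0r in h1.
move=> P /= hP.
have hP' := h1 P hP.
move: hP'; rewrite !nbhs_simpl /= => hP'.
rewrite /within /= in hP' *. move: hP'. rewrite /prop_near1 /= !nbhs_simpl. apply: filterS => s h2 Is.
have [->|st] := eqVneq s t; first exact: nbhs_singleton hP.
have nst : ~ [set t] s by move=> /= e; move: st; rewrite e eqxx.
have := h2 (conj Is nst).
by rewrite scalerA divff ?subr_eq0 // scale1r subrK.
Qed.

Lemma unif_ent (R : realType) (U : uniformType) (I : set R) (G : nat -> R -> U) (f : R -> U)
  (E : set (U * U)) :
  {uniform I, G @ \oo --> f} -> entourage E ->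
  \forall n \near \oo, forall s, I s -> E (f s, G n s).
Proof.
move=> hG entE.
have := hG [set h | forall y, I y -> E (f y, h y)]; apply.
by apply/uniform_nbhs; exists E; split.
Qed.

Lemma unif_pt (R : realType) (U : uniformType) (I : set R) (G : nat -> R -> U) (f : R -> U)
  (s : R) :
  {uniform I, G @ \oo --> f} -> I s -> (fun n => G n s) @ \oo --> f s.
Proof.
move=> hG Is; apply/cvg_app_entourageP => E entE.
by apply: filterS (unif_ent hG entE) => n /(_ s Is).
Qed.

Lemma unif_cont (R : realType) (U : uniformType) (I : set R) (G : nat -> R -> U) (f : R -> U)
  (t : R) :
  {uniform I, G @ \oo --> f} -> I t ->
  (forall n, G n @ within I (nbhs t) --> G n t) ->
  f @ within I (nbhs t) --> f t.
Proof.
move=> hG It hc; apply/cvg_app_entourageP => E entE.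
set E2 := split_ent E.
have eE2 : entourage E2 by exact: entourage_split_ent.
have eE3 : entourage (split_ent E2)^-1%relation.
  by apply: entourage_inv; exact: entourage_split_ent.
have [N [h1 h2]] := filter_ex (filterI (unif_ent hG eE2) (unif_ent hG eE3)).
have := hc N _ (nbhs_entourage (G N t) (entourage_split_ent eE2)).
rewrite !nbhs_simpl /within /= /prop_near1 /= !nbhs_simpl.
apply: filterS => s hs Is.
apply: (entourage_split (G N t)) => //; first exact: h1.
apply: (entourage_split (G N s)) => //.
  by have := hs Is; rewrite /= => /xsectionP.
exact: h2.
Qed.

Definition lfilter (R : realType) (I : set R) (t : R) : set_system (nat * R) :=
  within (fun q => I q.2) (filter_prod \oo (nbhs t)).

Global Instance lfilter_filter (R : realType) (I : set R) (t : R) : Filter (lfilter I t).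
Proof. exact: within_filter. Qed.

Lemma unif_loc (R : realType) (U : uniformType) (I : set R) (G : nat -> R -> U) (f : R -> U)
  (t : R) :
  {uniform I, G @ \oo --> f} -> f @ within I (nbhs t) --> f t ->
  (fun q => G q.1 q.2) @ lfilter I t --> f t.
Proof.
move=> hG hc; apply/cvg_app_entourageP => E entE.
set E2 := split_ent E.
have eE2 : entourage E2 by exact: entourage_split_ent.
have h1 := unif_ent hG eE2.
have := hc _ (nbhs_entourage (f t) eE2).
rewrite !nbhs_simpl /within /= /prop_near1 /= !nbhs_simpl => h2.
rewrite /lfilter /within /= /prop_near1 /= !nbhs_simpl.
exists (fun n => forall s, I s -> E2 (f s, G n s), fun s => I s -> xsection E2 (f t) (f s)).
  by split.
move=> [n s] [/= hn hs] Is.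
apply: (entourage_split (f s)) => //; last exact: hn.
by have := hs Is => /xsectionP.
Qed.

Lemma conv_set (R : realType) (W : tvsType R) (D : set W) :
  (forall x y l, 0 <= l -> l <= 1 -> D x -> D y -> D (l *: x + (1 - l) *: y)) ->
  convex_set (R:=R) (M:=W) D.
Proof.
move=> H x y l /set_mem Dx /set_mem Dy; apply/mem_set.
exact: (H x y l%:num (ge0 l) (le1 l) Dx Dy).
Qed.

Lemma compA_lem (R : realType) (V W : tvsType R) (Om : set V) (A : V -> V -> W -> W)
  (hA3 : {within [set p : V * V * W | Om p.1.1],
           continuous (fun p : V * V * W => A p.1.1 p.1.2 p.2)})
  (T : Type) (F : set_system T) (FF : Filter F) (h : T -> V * V * W) (p : V * V * W) :
  Om p.1.1 -> h @ F --> p -> (\forall q \near F, Om (h q).1.1) ->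
  (fun q => A (h q).1.1 (h q).1.2 (h q).2) @ F --> A p.1.1 p.1.2 p.2.
Proof.
move=> Op hp hOm.
have hc := (@subspace_continuousP _ [set p : V * V * W | Om p.1.1] _
   (fun p : V * V * W => A p.1.1 p.1.2 p.2)).1 hA3 p Op.
have hw : h @ F --> within [set p : V * V * W | Om p.1.1] (nbhs p).
  move=> P; rewrite nbhs_simpl /within /= /prop_near1 /= !nbhs_simpl => hP.
  change (F (h @^-1` P)).
  have h1 : F (fun q => Om (h q).1.1 -> P (h q)) := hp _ hP.
  by apply: filterS2 h1 hOm => q H1 H2; apply: H1.
exact: (cvg_trans (cvg_app _ hw) hc).
Qed.

Lemma cvg_near_eq (T : Type) (U : topologicalType) (F : set_system T) (FF : Filter F)
  (f g : T -> U) (l : U) :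
  (\forall q \near F, f q = g q) -> g @ F --> l -> f @ F --> l.
Proof.
move=> hfg hg P hP.
have h1 : F (g @^-1` P) := hg P hP.
change (F (f @^-1` P)).
by apply: filterS2 hfg h1 => q e h /=; rewrite e.
Qed.

Unset Implicit Arguments.

Theorem lemma6p1 (R : realType) (V W : tvsType R)
  (hV : hausdorff_space V) (hW : hausdorff_space W)
  (cV : seq_complete V) (cW : seq_complete W)
  (Om : set V) (Om_open : open Om)
  (A : V -> V -> W -> W) (hA : connection_form Om A)
  (I : interval R) (a b : R) (ab : a < b) (aI : a \in I) (bI : b \in I)
  (xn xn' : nat -> R -> V) (xnC1 : forall n, C1_on [set` I] (xn n) (xn' n))
  (xnOm : forall n t, t \in I -> Om (xn n t))
  (x x' : R -> V) (xC1 : C1_on [set` I] x x') (xOm : forall t, t \in I -> Om (x t))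
  (xn_cvg : {uniform [set` I], xn @ \oo --> x})
  (xn'_cvg : {uniform [set` I], xn' @ \oo --> x'})
  (xin xin' : nat -> R -> W)
  (xin_lift : forall n, parallel_lift A [set` I] (xn n) (xn' n) (xin n) (xin' n))
  (xi : R -> W) (xin_cvg : {uniform [set` I], xin @ \oo --> xi}) :
  exists xi' : R -> W, parallel_lift A [set` I] x x' xi xi'.
Proof.
have [hA1 hA2 hA3] := hA.
set J := [set` I].
have Isub : forall al be, J al -> J be -> forall u, al <= u <= be -> J u.
  by move=> al be ha hb u hu; exact: (interval_is_interval ha hb hu).
have xc : forall t, J t -> x @ within J (nbhs t) --> x t.
  by move=> t Jt; exact: (deriv_cont xC1.1 Jt).
have x'c : forall t, J t -> x' @ within J (nbhs t) --> x' t.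
  by move=> t Jt; have := (@subspace_continuousP _ J _ x').1 xC1.2; apply.
have xinc : forall n t, J t -> xin n @ within J (nbhs t) --> xin n t.
  by move=> n t Jt; exact: (deriv_cont (xin_lift n).1.1 Jt).
have xic : forall t, J t -> xi @ within J (nbhs t) --> xi t.
  by move=> t Jt; exact: (unif_cont xin_cvg Jt (fun n => xinc n t Jt)).
set g := fun t => - A (x t) (x' t) (xi t).
have liftE : forall n s, J s -> xin' n s = - A (xn n s) (xn' n s) (xin n s).
  move=> n s Js; apply/eqP; rewrite -addr_eq0; apply/eqP.
  exact: (xin_lift n).2 s Js.
have loc : forall t, J t -> (fun q => xin' q.1 q.2) @ lfilter J t --> g t.
  move=> t Jt.
  have htrip : (fun q => ((xn q.1 q.2, xn' q.1 q.2), xin q.1 q.2)) @ lfilter J t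
      --> ((x t, x' t), xi t).
    exact: (cvg_pair (cvg_pair (unif_loc xn_cvg (xc t Jt)) (unif_loc xn'_cvg (x'c t Jt)))
              (unif_loc xin_cvg (xic t Jt))).
  have hOm : \forall q \near lfilter J t,
      Om ((xn q.1 q.2, xn' q.1 q.2), xin q.1 q.2).1.1.
    by apply: filterS (withinT _ _) => q Jq; exact: xnOm.
  have := tcvgN (compA_lem hA3 (lfilter_filter J t) (xOm t Jt) htrip hOm).
  move=> /(_ (lfilter_filter J t)) hN; apply: (cvg_near_eq (lfilter_filter J t) _ hN).
  by apply: filterS (withinT _ _) => q Jq; exact: liftE.
have gc : forall t, J t -> g @ within J (nbhs t) --> g t.
  move=> t Jt.
  have htrip : (fun s => ((x s, x' s), xi s)) @ within J (nbhs t)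
      --> ((x t, x' t), xi t).
    exact: (cvg_pair (cvg_pair (xc t Jt) (x'c t Jt)) (xic t Jt)).
  have hOm : \forall s \near within J (nbhs t), Om ((x s, x' s), xi s).1.1.
    by apply: filterS (withinT _ _) => s Js; exact: xOm.
  exact: tcvgN (compA_lem hA3 _ (xOm t Jt) htrip hOm).
have gd : has_deriv_on J xi g.
  move=> t Jt.
  have [B Bconv [Bopen Bbasis]] := @locally_convex R W.
  move=> N; rewrite nbhs_simpl => hN.
  have [U [BU Ugt] UN] := Bbasis (g t) N hN.
  have oU : open U := Bopen U BU.
  have cU := Bconv U (mem_set BU).
  set D0 := fun z => U (g t + z).
  have nD0 : nbhs 0 D0.
    have := @tcvgD R W W (nbhs (0:W)) _ (fun=> g t) id (g t) 0 (cvg_cst _) cvg_id.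
    rewrite addr0 => h; apply: h.
    by move: oU; rewrite openE => /(_ _ Ugt).
  have convD0 : forall y z l, 0 <= l -> l <= 1 -> D0 y -> D0 z ->
      D0 (l *: y + (1 - l) *: z).
    move=> y z l l0 l1 Dy Dz; have := conv_comb cU Dy Dz l0 l1.
    by rewrite /D0 !scalerDr addrACA -scalerDl [l + _]addrC subrK scale1r.
  set D := fun z => D0 z /\ D0 (- z).
  have cD : convex_set (R:=R) (M:=W) D.
    apply: conv_set => y z l l0 l1 [Dy Dy'] [Dz Dz']; split; first exact: convD0.
    by rewrite opprD -!scalerN; exact: convD0.
  have sD : forall z, D z -> D (- z) by move=> z [h1 h2]; split; rewrite ?opprK.
  have nD : nbhs 0 D.
    apply: filterI; first exact: nD0.
    have h : (fun z : W => - z) @ nbhs (0:W) --> - 0 by apply: tcvgN; exact: cvg_id.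
    by move: h; rewrite oppr0 => h; exact: (h _ nD0).
  have q0 : (0:R) < 4^-1 by rewrite invr_gt0.
  have nb : nbhs (g t) (fun w => gauge D (w - g t) <= 4^-1).
    have h : (fun w : W => w - g t) @ nbhs (g t) --> g t - g t.
      by apply: tcvgB; [exact: cvg_id | exact: cvg_cst].
    by move: h; rewrite subrr => h; exact: (h _ (gauge_small nD sD q0)).
  have := loc t Jt _ nb.
  rewrite nbhs_simpl /lfilter /within /= /prop_near1 /= !nbhs_simpl.
  move=> [[Pn Qs] /= [hPn hQs] hPQ].
  have [d /= d0 hd] := (nbhs_ballP _ _).1 hQs.
  rewrite /within /= /prop_near1 /=.
  have mv : forall n al be, Pn n -> al <= be -> J al -> J be ->
      `|t - al| < d -> `|t - be| < d ->
      gauge D (xin n be - xin n al - (be - al) *: g t) <= 4^-1 * (be - al).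
    move=> n al be hn albe Jal Jbe hal hbe.
    apply: (mvt cD nD sD (I := J) (phi' := xin' n)) => //.
    - by move=> u hu; exact: (Isub _ _ Jal Jbe u hu).
    - by move=> u hu; apply: xinc; exact: (Isub _ _ Jal Jbe u hu).
    - move=> u /andP[h1 h2]; apply: (xin_lift n).1.1.
      by apply: (Isub _ _ Jal Jbe u); rewrite h1 ltW.
    - move=> u /andP[h1 h2]; apply: (hPQ (n, u)); last first.
        by apply: (Isub _ _ Jal Jbe u); rewrite h1 h2.
      split => //=; apply: hd; rewrite /ball /=.
      move: hal hbe; rewrite !ltr_norml => /andP[? ?] /andP[? ?].
      by apply/andP; split; lra.
  apply/nbhs_ballP; exists d => // s hs [Js nst].
  have hst : s != t by apply/eqP.
  have hs' : `|t - s| < d := hs.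
  have ts : `|t - t| < d by rewrite subrr normr0.
  have key : gauge D (xi s - xi t - (s - t) *: g t) <= 4^-1 * `|s - t|.
    apply: (@gauge_limit R W D cD nD sD nat \oo _
      (fun n => xin n s - xin n t - (s - t) *: g t)).
      apply: tcvgB; last exact: cvg_cst.
      by apply: tcvgB; exact: unif_pt xin_cvg _.
    apply: filterS hPn => n hn.
    case: (ltgtP s t) => [slt|tls|e]; last by move: hst; rewrite e eqxx.
      have := mv n s t hn (ltW slt) Js Jt hs' ts.
      have -> : xin n s - xin n t - (s - t) *: g t =
          (-1) *: (xin n t - xin n s - (t - s) *: g t).
        by rewrite scaleN1r opprD opprB opprK -scaleNr opprB.
      move=> h; apply: le_trans (gaugeZ nD sD _ _) _.
      rewrite normrN normr1 mul1r; apply: le_trans h _.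
      by rewrite ltr0_norm ?subr_lt0 // opprB.
    have := mv n t s hn (ltW tls) Jt Js ts hs'.
    by rewrite gtr0_norm // subr_gt0.
  apply: UN.
  have : D ((s - t)^-1 *: (xi s - xi t) - g t).
    apply: (gauge_lt1 cD nD).
    have -> : (s - t)^-1 *: (xi s - xi t) - g t =
        (s - t)^-1 *: (xi s - xi t - (s - t) *: g t).
      by rewrite [RHS]scalerBr scalerA mulVf ?subr_eq0 // scale1r.
    apply: le_lt_trans (gaugeZ nD sD _ _) _.
    apply: le_lt_trans (ler_wpM2l (normr_ge0 _) key) _.
    rewrite normfV mulrCA mulVf ?normr_eq0 ?subr_eq0 // mulr1.
    by rewrite invf_lt1 // ltr1n.
  by move=> [hD _]; move: hD; rewrite /D0 addrC subrK.
exists g; split; first split.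
- exact: gd.
- by apply/(@subspace_continuousP _ J _ g) => t Jt; exact: gc.
- by move=> t Jt; rewrite /g addNr.
Qed.
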